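(* Let $q$ be a prime power, $m\ge2$, $1\le k<n$. The set $\mathcal R_1^*\cap \mathcal K$ is in one-to-one correspondence with the set $$V_R := \{(\boldsymbol\alpha,\boldsymbol\beta)\in \mathbb{F}_{q^m}^k \times \mathbb{F}_{q^m}^{n-k-1} \mid \alpha_i,\ \alpha_i\beta_j \in \ker(\mathrm{Tr}_{\mathbb{F}_{q^m}/\mathbb{F}_q})\setminus\{0\} \text{ for all } i,j\},$$ which equals $\{(\boldsymbol\alpha,\boldsymbol\beta) \mid \alpha_i \in \ker(\mathrm{Tr}_{\mathbb{F}_{q^m}/\mathbb{F}_q})\setminus\{0\},\ \beta_j \in \bigcap_{i=1}^k\ker(\mathrm{T}_{\alpha_i})\setminus\{0\}\}$, via the map $\psi:V_R \to \mathcal R_1^*\cap \mathcal K$ given by $$(\boldsymbol\alpha,\boldsymbol\beta)\longmapsto (\alpha_1,\dots,\alpha_k)^T\,(1, \beta_1,\ldots, \beta_{n-k-1}).$$ Consequently $|\mathcal R_1^*\cap \mathcal K|\leq (q^{m-1}-1)^{n-1}$.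
   Context: $\mathrm{Tr}_{\mathbb{F}_{q^m}/\mathbb{F}_q}(\alpha)=\sum_{i=0}^{m-1}\alpha^{q^i}$, and for $\alpha\in\mathbb{F}_{q^m}^*$, $\mathrm{T}_\alpha:\mathbb{F}_{q^m}\to\mathbb{F}_q$ is $\beta\mapsto \mathrm{Tr}_{\mathbb{F}_{q^m}/\mathbb{F}_q}(\alpha\beta)$. $\mathcal R_1^*:=\{A\in (\mathbb{F}_{q^m}^* )^{k\times (n-k)} \mid \mathrm{rk}(A)=1\}$ and $\mathcal K:=\left(\ker \mathrm{Tr}_{\mathbb{F}_{q^m}/\mathbb{F}_q}\right)^{k\times(n-k)}$. *)

(* Defs.v *)
From HB Require Import structures.
From mathcomp Require Import all_boot all_order all_algebra.
Set Implicit Arguments. Unset Strict Implicit. Unset Printing Implicit Defensive.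
Import GRing.Theory.
Local Open Scope ring_scope.

(* L plays the role of F_{q^m}. Trace Tr_{F_{q^m}/F_q}(x) = sum_{i<m} x^(q^i),
   viewed as an element of L (it lies in the subfield F_q). *)
Definition trace (L : finFieldType) (q m : nat) (x : L) : L :=
  \sum_(i < m) x ^+ (q ^ i)%N.

Definition Talpha (L : finFieldType) (q m : nat) (a : L) (b : L) : L :=
  trace q m (a * b).

Definition kerTr (L : finFieldType) (q m : nat) : {set L} :=
  [set x | trace q m x == 0].

Definition kerT (L : finFieldType) (q m : nat) (a : L) : {set L} :=
  [set y | Talpha q m a y == 0].

Definition R1star (L : finFieldType) (k r : nat) : {set 'M[L]_(k, r)} :=
  [set A : 'M[L]_(k, r) | [forall i, forall j, A i j != 0] && (\rank A == 1)%N].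

Definition Kset (L : finFieldType) (q m k r : nat) : {set 'M[L]_(k, r)} :=
  [set A : 'M[L]_(k, r) | [forall i, forall j, A i j \in kerTr L q m]].

Definition VR (L : finFieldType) (q m k p : nat) : {set 'cV[L]_k * 'rV[L]_p} :=
  [set ab : 'cV[L]_k * 'rV[L]_p | [forall i, ab.1 i 0 \in kerTr L q m :\ 0]
         && [forall i, forall j, ab.1 i 0 * ab.2 0 j \in kerTr L q m :\ 0]].

Definition VR' (L : finFieldType) (q m k p : nat) : {set 'cV[L]_k * 'rV[L]_p} :=
  [set ab : 'cV[L]_k * 'rV[L]_p | [forall i, ab.1 i 0 \in kerTr L q m :\ 0]
         && [forall j, ab.2 0 j \in
               (\bigcap_(i < k) kerT q m (ab.1 i 0)) :\ 0]].

(* the row vector (1, beta_1, ..., beta_p) of length r (used with r = p + 1) *)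
Definition ext1 (L : finFieldType) (p r : nat) (b : 'rV[L]_p) : 'rV[L]_r :=
  \row_(j < r) nth 0 (1 :: [seq b 0 i | i <- enum 'I_p]) j.

Definition psi (L : finFieldType) (k p r : nat) (ab : 'cV[L]_k * 'rV[L]_p)
  : 'M[L]_(k, r) := ab.1 *m ext1 r ab.2.

(* Main.v *)
Require Import Defs.
From HB Require Import structures.
From mathcomp Require Import all_boot all_order all_algebra.
Set Implicit Arguments. Unset Strict Implicit. Unset Printing Implicit Defensive.
Import GRing.Theory.
Local Open Scope ring_scope.

Section Main.
Variables (L : finFieldType) (q m : nat).

Lemma trace0 : (0 < q)%N -> trace q m (0 : L) = 0.
Proof.
move=> q0; rewrite /trace big1 // => i _; rewrite expr0n.
by rewrite eqn0Ngt expn_gt0 q0.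
Qed.

Lemma card_kerTr : (1 < q)%N -> (1 <= m)%N -> (#|kerTr L q m| <= q ^ (m - 1))%N.
Proof.
move=> q1 m1.
pose P : {poly L} := \sum_(i < m) 'X^(q ^ i).
have hP : forall x, P.[x] = trace q m x.
  by move=> x; rewrite /P horner_sum; apply: eq_bigr => i _; rewrite hornerXn.
have cP : forall j, P`_j = \sum_(i < m) ((j == q ^ i)%N)%:R.
  by move=> j; rewrite coef_sum; apply: eq_bigr => i _; rewrite coefXn.
have Pn0 : P != 0.
  have lt : (m - 1 < m)%N by rewrite subn1 prednK.
  apply/eqP => /(congr1 (fun p : {poly L} => p`_(q ^ (m - 1))%N)).
  rewrite cP coef0 (bigD1 (Ordinal lt)) //= eqxx big1 ?addr0; first by move/eqP; rewrite oner_eq0.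
  move=> i ne; rewrite eqn_exp2l //.
  have -> : ((m - 1)%N == nat_of_ord i) = false.
    apply/negbTE; move: ne; apply: contra => /eqP e; apply/eqP; apply: ord_inj => /=; by rewrite -e.
  by [].
have sP : (size P <= (q ^ (m - 1)).+1)%N.
  apply/leq_sizeP => j hj; rewrite cP big1 // => i _.
  have -> : (j == q ^ nat_of_ord i)%N = false; last by [].
  apply/negbTE; rewrite neq_ltn; apply/orP; right.
  apply: leq_trans hj; rewrite ltnS leq_exp2l //.
  by rewrite -ltnS subn1 prednK // ltn_ord.
have := max_poly_roots Pn0 (rs := enum (kerTr L q m)).
rewrite cardE; move=> H; have := leq_trans (H _ _) sP; rewrite ltnS; apply.
  by apply/allP => x; rewrite mem_enum inE /root hP.
exact: enum_uniq.
Qed.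


End Main.

Section Mat.
Variables (L : finFieldType) (k p : nat).

Lemma ext1_0 (b : 'rV[L]_p) : ext1 p.+1 b 0 ord0 = 1.
Proof. by rewrite /ext1 mxE. Qed.

Lemma ext1_S (b : 'rV[L]_p) j : ext1 p.+1 b 0 (lift ord0 j) = b 0 j.
Proof.
rewrite /ext1 mxE /= /bump /= add0n (nth_map (j : 'I_p)) ?size_enum_ord //.
by rewrite nth_ord_enum.
Qed.

Lemma psiE (ab : 'cV[L]_k.+1 * 'rV[L]_p) i j :
  psi p.+1 ab i j = ab.1 i 0 * ext1 p.+1 ab.2 0 j.
Proof. by rewrite /psi mxE big_ord1. Qed.

Lemma rank1E (A : 'M[L]_(k.+1, p.+1)) : A \in R1star L k.+1 p.+1 ->
  forall i j, A i j * A 0 0 = A i 0 * A 0 j.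
Proof.
rewrite inE => /andP [/forallP nz /eqP r1] i j.
have r0 : \rank (row 0 A) = 1%N.
  apply/eqP; rewrite eqn_leq rank_leq_row lt0n mxrank_eq0.
  apply/eqP => /matrixP /(_ 0 0); rewrite !mxE => e.
  by move: (forallP (nz 0) 0); rewrite e eqxx.
have sA : (A <= row 0 A)%MS.
  have := mxrank_leqif_sup (row_sub 0 A); rewrite r0 r1 => /leqifP.
  by rewrite ltnn; case: ifP.
have /sub_rVP [c hc] := submx_trans (row_sub i A) sA.
have e : forall l, A i l = c * A 0 l.
  by move=> l; move/matrixP: hc => /(_ 0 l); rewrite !mxE.
by rewrite !e mulrAC.
Qed.

Variables (q m : nat).

Lemma VR_eq : VR L q m k.+1 p = VR' L q m k.+1 p.
Proof.
apply/setP => ab; rewrite !inE; apply/andP/andP => [] [/forallP ha hb]; split.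
- by apply/forallP.
- apply/forallP => j; move/forallP: hb => hb.
  rewrite !inE; apply/andP; split.
    move: (forallP (hb 0) j); rewrite !inE => /andP [nz _].
    by apply: contraNneq nz => ->; rewrite mulr0.
  apply/bigcapP => i _; rewrite inE /Talpha.
  by move: (forallP (hb i) j); rewrite !inE => /andP [_ ->].
- by apply/forallP.
- apply/forallP => i; apply/forallP => j; move/forallP: hb => /(_ j).
  rewrite !inE => /andP [nzb /bigcapP hc].
  move: (ha i); rewrite !inE => /andP [nza _].
  rewrite mulf_neq0 //=.
  by move: (hc i isT); rewrite inE /Talpha.
Qed.

Lemma psi_inj : {in VR L q m k.+1 p, injective (@psi L k.+1 p p.+1)}.
Proof.
move=> [a b] hab [a' b'] e.
have e1 : a = a'.
  apply/matrixP => i l; rewrite (ord1 l).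
  by move/matrixP: e => /(_ i ord0); rewrite !psiE /= !ext1_0 !mulr1.
subst a'; congr pair.
apply/matrixP => l j; rewrite (ord1 l).
move/matrixP: e => /(_ 0 (lift ord0 j)); rewrite !psiE /= !ext1_S.
have nz : a 0 0 != 0.
  by move: hab; rewrite inE => /andP [/forallP /(_ 0) + _]; rewrite !inE => /andP [].
by move/(mulfI nz).
Qed.

Lemma psi_img : (@psi L k.+1 p p.+1) @: VR L q m k.+1 p
        = R1star L k.+1 p.+1 :&: Kset L q m k.+1 p.+1.
Proof.
apply/setP => A; apply/imsetP/idP.
- move=> [[a b] hab ->]; move: hab; rewrite inE => /andP [/forallP ha /forallP hb].
  have ent : forall i j, psi p.+1 (a, b) i j \in kerTr L q m :\ 0.
    move=> i j; rewrite psiE /=.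
    case: (unliftP ord0 j) => [j'|] ->; first by rewrite ext1_S; exact: (forallP (hb i) j').
    by rewrite ext1_0 mulr1; exact: ha.
  rewrite !inE; apply/andP; split; last first.
    by apply/forallP => i; apply/forallP => j; move: (ent i j); rewrite !inE => /andP [].
  apply/andP; split.
    by apply/forallP => i; apply/forallP => j; move: (ent i j); rewrite !inE => /andP [].
  rewrite eqn_leq; apply/andP; split.
    by rewrite /psi (leq_trans (mxrankM_maxl _ _)) // rank_leq_col.
  rewrite lt0n mxrank_eq0; apply/eqP => /matrixP /(_ 0 0); move=> e0.
  by move: (ent 0 0); rewrite e0 mxE !inE eqxx.
- rewrite inE => /andP [hR hK].
  have r1 := rank1E hR.
  move: hR hK; rewrite !inE => /andP [/forallP nz _] /forallP hK.
  have nz00 : A 0 0 != 0 by exact: (forallP (nz 0) 0).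
  pose a : 'cV[L]_k.+1 := \col_(i < k.+1) A i 0.
  pose b : 'rV[L]_p := \row_(j < p) (A 0 (lift ord0 j) / A 0 0).
  have key : forall i j, a i 0 * b 0 j = A i (lift ord0 j).
    move=> i j; rewrite !mxE mulrA -r1 mulfK //.
  exists (a, b).
    rewrite inE; apply/andP; split.
      apply/forallP => i; rewrite !inE mxE (forallP (nz i) 0) /=.
      by move: (forallP (hK i) 0); rewrite inE.
    apply/forallP => i; apply/forallP => j; rewrite key !inE (forallP (nz i)) /=.
    by move: (forallP (hK i) (lift ord0 j)); rewrite inE.
  apply/matrixP => i j; rewrite psiE /=.
  case: (unliftP ord0 j) => [j'|] ->; first by rewrite ext1_S key.
  by rewrite ext1_0 mulr1 mxE.
Qed.

Lemma card_bound : (1 < q)%N -> (1 <= m)%N ->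
  (#|R1star L k.+1 p.+1 :&: Kset L q m k.+1 p.+1| <= (q ^ (m - 1) - 1) ^ (k.+1 + p))%N.
Proof.
move=> q1 m1.
set S := R1star L k.+1 p.+1 :&: Kset L q m k.+1 p.+1.
pose g (A : 'M[L]_(k.+1, p.+1)) : {ffun 'I_k.+1 + 'I_p -> L} :=
  [ffun x => match x with inl i => A i 0 | inr j => A 0 (lift ord0 j) end].
have ginj : {in S &, injective g}.
  move=> A B; rewrite !in_setI => /andP [hA _] /andP [hB _] e.
  have eA := rank1E hA; have eB := rank1E hB.
  have c0 : forall i, A i 0 = B i 0 by move=> i; move/ffunP: e => /(_ (inl i)); rewrite !ffunE.
  have r0 : forall j, A 0 (lift ord0 j) = B 0 (lift ord0 j).
    by move=> j; move/ffunP: e => /(_ (inr j)); rewrite !ffunE.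
  move: hA; rewrite inE => /andP [/forallP nzA _].
  have nz : A 0 0 != 0 by exact: (forallP (nzA 0) 0).
  apply/matrixP => i j.
  case: (unliftP ord0 j) => [j'|] ->; last exact: c0.
  apply: (mulIf nz); rewrite eA.
  by rewrite (c0 i) (c0 0) eB r0.
rewrite -(card_in_imset ginj).
have sub : g @: S \subset ffun_on (kerTr L q m :\ 0).
  apply/subsetP => _ /imsetP [A hA ->]; apply/ffun_onP => x.
  move: hA; rewrite !inE => /andP [/andP [/forallP nz _] /forallP hK].
  rewrite ffunE; case: x => [i|j]; rewrite (forallP (nz _)) /=.
    by move: (forallP (hK i) 0); rewrite inE.
  by move: (forallP (hK 0) (lift ord0 j)); rewrite inE.
apply: (leq_trans (subset_leq_card sub)); rewrite card_ffun_on card_sum !card_ord.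
have ck := card_kerTr L q1 m1.
have hD : (#|kerTr L q m :\ 0%R| <= q ^ (m - 1) - 1)%N.
  have := cardsD1 (0 : L) (kerTr L q m); rewrite inE trace0 ?eqxx ?(ltnW q1) //= => h.
  by move: ck; rewrite h add1n => /(leq_sub2r 1%N); rewrite subn1.
by rewrite leq_exp2r.
Qed.

End Mat.

Unset Implicit Arguments.

Theorem lemma4p10 (L : finFieldType) (q m n k : nat) :
  (exists p e : nat, [/\ prime p, (0 < e)%N & q = (p ^ e)%N]) ->
  (2 <= m)%N -> #|L| = (q ^ m)%N ->
  (1 <= k)%N -> (k < n)%N ->
  [/\ VR L q m k (n - k - 1) = VR' L q m k (n - k - 1),
      {in VR L q m k (n - k - 1), injective (@psi L k (n - k - 1) (n - k))},
      (@psi L k (n - k - 1) (n - k)) @: VR L q m k (n - k - 1)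
        = R1star L k (n - k) :&: Kset L q m k (n - k)
    & (#|R1star L k (n - k) :&: Kset L q m k (n - k)|
        <= (q ^ (m - 1) - 1) ^ (n - 1))%N].
Proof.
move=> [p0 [e [pp e0 qE]]] m2 _ k1 kn.
have q1 : (1 < q)%N by rewrite qE -{1}(expn0 p0) ltn_exp2l // prime_gt1.
have m1 : (1 <= m)%N by apply: leq_trans m2.
case: k k1 kn => // k _ kn.
have E : (n - k.+1 = (n - k.+1 - 1).+1)%N by rewrite subn1 prednK // subn_gt0.
have En : (n - 1 = k.+1 + (n - k.+1 - 1))%N.
  by rewrite addnBA ?subn_gt0 // subnKC // ltnW.
move: (n - k.+1 - 1)%N E En => p E En.
rewrite E En; split.
- exact: VR_eq.
- exact: psi_inj.
- exact: psi_img.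
- exact: card_bound.
Qed.
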